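(* Let $f\in\{0,1\}^n$ be tilde-non-isometric. Then either $f$ has a $1$-tilde-error overlap of type S, or $f$ has a $2$-tilde-error overlap.
   Context: Words are over $\{0,1\}$. For $w$ of length $n$: $w[i]$ is its $i$-th symbol, $\mathrm{pre}_l(w)=w[1..l]$ and $\mathrm{suf}_l(w)=w[n-l+1..n]$. A word is $f$-free if it does not contain $f$ as a factor. Operations: the replacement $R_i$ flips the symbol at position $i$. The swap $S_i$ is defined when $w[i]\ne w[i+1]$ and exchanges these two symbols. $\mathrm{dist}_\sim(u,v)$ is the minimum number of replacements and swaps transforming $u$ into the equal-length word $v$. A tilde-transformation from $u$ to $v$ is a sequence of words from $u$ to $v$, each obtained from the previous by one replacement or swap. It is minimal if it uses exactly $\mathrm{dist}_\sim(u,v)$ operations and each position is modified by at most one operation (a swap $S_i$ modifies positions $i,i+1$). A word $f$ of length $n$ is tilde-isometric if, for every $m>n$ and all $f$-free $u,v\in\{0,1\}^m$, there exists a minimal tilde-transformation from $u$ to $v$ all of whose words are $f$-free. Otherwise it is tilde-non-isometric. $f$ has a $q$-tilde-error overlap of length $l$, where $1\le l\le n-1$, if $\mathrm{dist}_\sim(\mathrm{pre}_l(f),\mathrm{suf}_l(f))=q$. A $1$-tilde-error overlap of length $l$ is of type S if $\mathrm{suf}_l(f)=S_i(\mathrm{pre}_l(f))$ for some $i$. *)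

(* Defs.v *)
From mathcomp Require Import all_boot.
Set Implicit Arguments. Unset Strict Implicit. Unset Printing Implicit Defensive.

(* Binary words: seq bool. Positions are 0-indexed here (paper: 1-indexed). *)
Definition word := seq bool.

Inductive op := R of nat | S of nat.

Definition op_valid (w : word) (o : op) : bool :=
  match o with
  | R i => i < size w
  | S i => (i.+1 < size w) && (nth false w i != nth false w i.+1)
  end.

Definition apply_op (w : word) (o : op) : word :=
  match o with
  | R i => set_nth false w i (~~ nth false w i)
  | S i => set_nth false (set_nth false w i (nth false w i.+1)) i.+1 (nth false w i)
  end.

Definition modified (o : op) : seq nat :=
  match o with R i => [:: i] | S i => [:: i; i.+1] end.

Fixpoint valid_seq (w : word) (os : seq op) : bool :=
  match os with
  | [::] => true
  | o :: os' => op_valid w o && valid_seq (apply_op w o) os'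
  end.

Fixpoint trace (w : word) (os : seq op) : seq word :=
  w :: match os with
       | [::] => [::]
       | o :: os' => trace (apply_op w o) os'
       end.

Definition transforms (u v : word) (os : seq op) : Prop :=
  valid_seq u os /\ foldl apply_op u os = v.

Definition dist_tilde (u v : word) (d : nat) : Prop :=
  (exists os, transforms u v os /\ size os = d) /\
  (forall os, transforms u v os -> d <= size os).

Definition minimal_trans (u v : word) (os : seq op) : Prop :=
  transforms u v os /\ dist_tilde u v (size os) /\
  uniq (flatten (map modified os)).

Definition free (f w : word) : bool := ~~ infix f w.

Definition pre (l : nat) (w : word) : word := take l w.
Definition suf (l : nat) (w : word) : word := drop (size w - l) w.

Definition tilde_isometric (f : word) : Prop :=
  forall m, size f < m -> forall u v : word,
    size u = m -> size v = m -> free f u -> free f v ->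
    exists os, minimal_trans u v os /\ all (free f) (trace u os).

Definition err_overlap (f : word) (q l : nat) : Prop :=
  1 <= l <= (size f).-1 /\ dist_tilde (pre l f) (suf l f) q.

Definition overlap_typeS (f : word) (l : nat) : Prop :=
  err_overlap f 1 l /\
  exists i, op_valid (pre l f) (S i) /\ suf l f = apply_op (pre l f) (S i).

(* Main.v *)
Require Import Defs.
From mathcomp Require Import all_boot zify.
From Stdlib Require Import Classical.
Set Implicit Arguments. Unset Strict Implicit. Unset Printing Implicit Defensive.

From HB Require Import structures.
Definition op_eqb o1 o2 := match o1, o2 with R i, R j => i == j | S i, S j => i == j | _, _ => false end.
Lemma op_eqP : Equality.axiom op_eqb.
Proof. by case=> i [] j /=; try (by constructor); apply: (iffP eqP) => [->|[]]. Qed.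
HB.instance Definition _ := hasDecEq.Build op op_eqP.

Definition lp (o : op) : nat := match o with R i => i | S i => i end.
Definition isS (o : op) : bool := match o with R _ => false | S _ => true end.

Lemma mem_mod o k : (k \in modified o) = ((k == lp o) || (isS o && (k == (lp o).+1))).
Proof. by case: o => i /=; rewrite !inE ?orbF. Qed.

Definition opv (w : word) (o : op) (k : nat) : bool :=
  match o with
  | R i => ~~ nth false w i
  | S i => if k == i then nth false w i.+1 else nth false w i
  end.

Lemma op_valid_size w o k : op_valid w o -> k \in modified o -> k < size w.
Proof.
case: o => i /=; rewrite !inE.
- by move=> H /eqP->.
- by case/andP=> H _ /orP[/eqP->|/eqP->] //; lia.
Qed.

Lemma size_apply w o : op_valid w o -> size (apply_op w o) = size w.
Proof.
case: o => i /=.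
- by move=> H; rewrite size_set_nth; lia.
- by case/andP=> H _; rewrite !size_set_nth; lia.
Qed.

Lemma nth_apply w o k : op_valid w o ->
  nth false (apply_op w o) k = if k \in modified o then opv w o k else nth false w k.
Proof.
case: o => i /=; rewrite !inE.
- by move=> _; rewrite nth_set_nth /=; case: eqP.
- move=> _; rewrite !nth_set_nth /=.
  case: (k =P i.+1) => [->|]; first by rewrite orbT; case: eqP => //; lia.
  by rewrite orbF nth_set_nth /=; case: (k =P i).
Qed.

Lemma opv_neq w o k : op_valid w o -> k \in modified o -> opv w o k != nth false w k.
Proof.
case: o => i /=; rewrite !inE.
- by move=> _ /eqP->; case: nth.
- case/andP=> _ H /orP[/eqP->|/eqP->]; first by rewrite eqxx eq_sym.
  by rewrite ifN //; lia.
Qed.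

Lemma opv_ext w w' o k : (forall j, j \in modified o -> nth false w j = nth false w' j) ->
   op_valid w o -> opv w o k = opv w' o k.
Proof.
case: o => i /= H.
- by rewrite H // inE.
- by move=> _; rewrite !H // !inE eqxx ?orbT.
Qed.

Lemma op_valid_ext w w' o : size w = size w' ->
  (forall j, j \in modified o -> nth false w j = nth false w' j) ->
  op_valid w o = op_valid w' o.
Proof.
case: o => i /= Hs H; rewrite Hs //.
by rewrite !H // !inE eqxx ?orbT.
Qed.

Fixpoint sem (w : word) (D : seq op) (k : nat) : bool :=
  match D with
  | [::] => nth false w k
  | o :: D' => if k \in modified o then opv w o k else sem w D' k
  end.

Definition pos (D : seq op) := flatten (map modified D).

Lemma disj D o1 o2 k : uniq (pos D) -> o1 \in D -> o2 \in D ->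
  k \in modified o1 -> k \in modified o2 -> o1 = o2.
Proof.
elim: D => //= o D IH; rewrite /pos /= cat_uniq => /and3P[_ Hd Hu].
rewrite !inE => /orP[/eqP->|H1] /orP[/eqP->|H2] // K1 K2.
- have F : k \in pos D by apply/flatten_mapP; exists o2.
  by move: Hd => /hasPn/(_ k F); rewrite K1.
- have F : k \in pos D by apply/flatten_mapP; exists o1.
  by move: Hd => /hasPn/(_ k F); rewrite K2.
- exact: IH.
Qed.

Definition DS (w : word) (D : seq op) := uniq (pos D) && all (op_valid w) D.

Lemma sem_in w D o k : uniq (pos D) -> o \in D -> k \in modified o -> sem w D k = opv w o k.
Proof.
elim: D => //= o' D IH U; rewrite inE => /orP[/eqP<- ->//|H] K.
case: ifP => K'.
  by rewrite (@disj (o'::D) o' o k) // ?inE ?eqxx ?H ?orbT.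
by apply: IH => //; move: U; rewrite /pos /= cat_uniq => /and3P[].
Qed.

Lemma sem_out w D k : (forall o, o \in D -> k \notin modified o) -> sem w D k = nth false w k.
Proof.
elim: D => //= o D IH H; rewrite ifN ?H ?inE ?eqxx //; apply: IH => o' O'.
by apply: H; rewrite inE O' orbT.
Qed.

Lemma disj_head o D o' k : uniq (pos (o :: D)) -> o' \in D -> k \in modified o -> k \notin modified o'.
Proof.
rewrite /pos /= cat_uniq => /and3P[_ Hd _] O' K; apply/negP => K'.
have F : k \in pos D by apply/flatten_mapP; exists o'.
by move: Hd => /hasPn/(_ k F); rewrite K.
Qed.

Lemma sem_ext w w' D k : (forall j, (j \in pos D) || (j == k) -> nth false w j = nth false w' j) ->
  sem w D k = sem w' D k.
Proof.
elim: D => [|o D IH] H /=; first by apply: H; rewrite eqxx orbT.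
case: ifP => K.
  case: o K H => i K H /=; first by rewrite H // /pos /= inE eqxx.
  by rewrite !H // /pos /= !inE eqxx ?orbT.
apply: IH => j /orP[J|J]; apply: H; last by rewrite J orbT.
by rewrite /pos /= mem_cat J orbT.
Qed.

Lemma sem_apply w D o k : uniq (pos (o :: D)) -> op_valid w o ->
  sem (apply_op w o) D k = sem w (o :: D) k.
Proof.
move=> U V /=.
case: ifP => K.
  rewrite sem_out ?nth_apply ?K // => o' O'; exact: (disj_head U O' K).
apply: sem_ext => j /orP[J|/eqP->]; rewrite nth_apply // ?K //.
case: ifP => // J'; move/flatten_mapP: J => [o' O' J''].
by move: (disj_head U O' J'); rewrite J''.
Qed.

Lemma lp_mod o : lp o \in modified o.
Proof. by case: o => i; rewrite /= inE eqxx. Qed.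

Lemma sem_perm w D D' k : uniq (pos D) -> perm_eq D D' -> sem w D k = sem w D' k.
Proof.
move=> U P.
have U' : uniq (pos D') by rewrite -(perm_uniq (perm_flatten (perm_map modified P))).
have [/hasP[o O K]|/hasPn N] := boolP (has (fun o => k \in modified o) D).
  by rewrite (sem_in _ U O K) (sem_in _ U' _ K) // -(perm_mem P).
rewrite !sem_out // => o O; apply: N => //; first by rewrite (perm_mem P).
Qed.

Lemma op_valid_apply w o o' : uniq (pos (o :: [:: o'])) -> op_valid w o -> op_valid w o' ->
  op_valid (apply_op w o) o'.
Proof.
move=> U V V'; rewrite (@op_valid_ext _ w) ?size_apply // => j J.
rewrite nth_apply //; case: ifP => // J'.
by move: (@disj_head o [:: o'] o' j U); rewrite inE eqxx J => /(_ isT J').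
Qed.

Lemma uniq_pos_rem D o : uniq (pos D) -> o \in D -> uniq (pos (o :: rem o D)).
Proof.
move=> U O; by rewrite -(perm_uniq (perm_flatten (perm_map modified (perm_to_rem O)))).
Qed.

Lemma uniq_pos_pair D o o' : uniq (pos D) -> o \in D -> o' \in D -> o != o' -> uniq (pos [:: o; o']).
Proof.
move=> U O O' N; rewrite /pos /= cats0 cat_uniq.
have [/hasP[k K1 K2]|/hasPn H] := boolP (has (mem (modified o)) (modified o')).
  by move: N; rewrite (disj U O O' K2 K1) eqxx.
apply/and3P; split.
- by case: (o) => j /=; rewrite ?inE ?andbT //; lia.
- by [].
- by case: (o') => j /=; rewrite ?inE ?andbT //; lia.
Qed.

Lemma M f (Hno : forall w D v, D != [::] -> DS w D -> size v = size w ->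
     (forall k, nth false v k = sem w D k) -> free f w -> free f v ->
     exists2 o, o \in D & free f (apply_op w o)) :
  forall n D w v, size D = n -> DS w D -> size v = size w ->
  (forall k, nth false v k = sem w D k) -> free f w -> free f v ->
  exists os, perm_eq os D /\ valid_seq w os /\ foldl apply_op w os = v /\ all (free f) (trace w os).
Proof.
elim=> [|n IH] D w v SD /andP[U V] Sv Hv Fw Fv.
  move: SD => /size0nil SD; subst D; exists [::]; split => //=; split => //.
  split; last by rewrite Fw.
  by apply: (@eq_from_nth _ false) => // k _; rewrite Hv.
have DN : D != [::] by case: (D) SD.
have [o O Fo] := Hno w D v DN (introT andP (conj U V)) Sv Hv Fw Fv.
have U1 := uniq_pos_rem U O.
have Vo : op_valid w o by move/allP: V => /(_ o O).
have U2 : uniq (pos (rem o D)) by move: U1; rewrite /pos /= cat_uniq => /and3P[].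
have V2 : all (op_valid (apply_op w o)) (rem o D).
  apply/allP => o' O'; apply: op_valid_apply => //.
    apply: (@uniq_pos_pair D) => //; first exact: (mem_rem O').
    apply/negP => /eqP E; subst o'.
    by move: (disj_head U1 O' (lp_mod o)); rewrite lp_mod.
  by move/allP: V; apply; exact: (mem_rem O').
have S1 : size (rem o D) = n by rewrite size_rem // SD.
have S2 : size v = size (apply_op w o) by rewrite size_apply.
have S3 : forall k, nth false v k = sem (apply_op w o) (rem o D) k.
  by move=> k; rewrite Hv sem_apply // (sem_perm w k U (perm_to_rem O)).
have [os [P1 [V1 [E1 F1]]]] := IH (rem o D) (apply_op w o) v S1 (introT andP (conj U2 V2)) S2 S3 Fo Fv.
exists (o :: os); split; first apply: (@perm_trans _ (o :: rem o D)); [by rewrite perm_cons | by rewrite perm_sym perm_to_rem | idtac].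
by rewrite /= Vo V1 E1 Fw F1.
Qed.

Fixpoint g (u v : word) : nat :=
  match u, v with
  | a :: u1, x :: v1 =>
    if a == x then g u1 v1 else
    match u1, v1 with
    | b :: u2, y :: v2 => if (a != b) && (b != y) then (g u2 v2).+1 else (g u1 v1).+1
    | _, _ => (g u1 v1).+1
    end
  | _, _ => 0
  end.

Lemma gE a b u x y v : g (a :: b :: u) (x :: y :: v) =
  if a == x then g (b :: u) (y :: v) else
  if (a != b) && (b != y) then (g u v).+1 else (g (b :: u) (y :: v)).+1.
Proof. by []. Qed.

Lemma g_nil_l v : g [::] v = 0. Proof. by []. Qed.
Lemma g_nil_r u : g u [::] = 0. Proof. by case: u. Qed.

Lemma gL n : forall u, size u <= n ->
  (forall c z v, g (c :: u) (z :: v) <= (g u v).+1) /\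
  (forall c z v, g u v <= g (c :: u) (z :: v)).
Proof.
elim: n => [|n IH] [|b u] // Hs.
- split=> c z v; last by rewrite ?g_nil_l.
  by case: v => [|y v] /=; case: ifP.
- split=> c z v; last by rewrite ?g_nil_l.
  by case: v => [|y v] /=; case: ifP.
have [IH1 IH2] := IH u Hs.

have L1 : forall c z v, g (c :: b :: u) (z :: v) <= (g (b :: u) v).+1.
  move=> c z [|y v]; first by rewrite /=; case: ifP.
  rewrite gE; case: ifP => _; first lia.
  case: ifP => _; last lia.
  by have := IH2 b y v; lia.
split => // c z [|y v]; first by rewrite ?g_nil_r.
rewrite gE.
have H := IH1 b y v.
case: ifP => _; first lia.
case: ifP => _; lia.
Qed.

Lemma gL1 c z u v : g (c :: u) (z :: v) <= (g u v).+1.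
Proof. by have [H _] := gL (leqnn (size u)); apply: H. Qed.
Lemma gL2 c z u v : g u v <= g (c :: u) (z :: v).
Proof. by have [_ H] := gL (leqnn (size u)); apply: H. Qed.

Definition shift1 (o : op) : op := match o with R i => R i.+1 | S i => S i.+1 end.

Lemma apply_shift1 a u o : apply_op (a :: u) (shift1 o) = a :: apply_op u o.
Proof. by case: o. Qed.
Lemma valid_shift1 a u o : op_valid (a :: u) (shift1 o) = op_valid u o.
Proof. by case: o. Qed.
Lemma mod_shift1 o k : (k.+1 \in modified (shift1 o)) = (k \in modified o).
Proof. by case: o => i; rewrite /= !inE. Qed.
Lemma mod0_shift1 o : (0 \in modified (shift1 o)) = false.
Proof. by case: o => i; rewrite /= !inE. Qed.
Lemma opv_shift1 a u o k : opv (a :: u) (shift1 o) k.+1 = opv u o k.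
Proof. by case: o. Qed.

Lemma g_single a u x : g (a :: u) [:: x] = (a != x).
Proof. by rewrite /=; case: ifP => //; case: u. Qed.

Lemma g_eq a u v : g (a :: u) (a :: v) = g u v.
Proof. by rewrite /= eqxx. Qed.

Lemma g4_shift n a u1 x v1 o' :
  (forall u o v, size u <= n -> op_valid u o -> g u v <= (g (apply_op u o) v).+1) ->
  size (a :: u1) <= n.+1 -> op_valid u1 o' ->
  g (a :: u1) (x :: v1) <= (g (a :: apply_op u1 o') (x :: v1)).+1.
Proof.
move=> IH Hs Vo.
case: u1 Hs Vo => [|b u2] Hs Vo; first by case: o' Vo.
case: v1 => [|y v2]; first by rewrite !g_single; case: (a != x).
case: o' Vo => [[|i]|[|i]] Vo.
- rewrite (_ : apply_op (b :: u2) (R 0) = ~~ b :: u2) // !gE.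
  have := gL1 b y u2 v2; have := gL2 b y u2 v2; have := gL1 (~~ b) y u2 v2; have := gL2 (~~ b) y u2 v2.
  by clear Hs Vo; case: a; case: b; case: x; case: y => //=; lia.
- rewrite (_ : R i.+1 = shift1 (R i)) // apply_shift1 !gE.
  rewrite (_ : R i.+1 = shift1 (R i)) // valid_shift1 in Vo.
  have Hs1 : size u2 <= n by move: Hs => /=; lia.
  have Hs2 : size (b :: u2) <= n by move: Hs => /=; lia.
  have := IH u2 (R i) v2 Hs1 Vo.
  have := IH (b :: u2) (shift1 (R i)) (y :: v2) Hs2; rewrite (valid_shift1 b u2 (R i)) (apply_shift1 b u2 (R i)) => /(_ Vo).
  by case: (a == x) => /=; [lia | case: ((a != b) && (b != y)) => /=; lia].
- case: u2 Hs Vo => [|c u3] Hs Vo; first by case/andP: Vo.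
  case/andP: Vo => _ Vbc.
  rewrite (_ : apply_op [:: b, c & u3] (S 0) = [:: c, b & u3]) //.
  case: v2 => [|z v3].
    rewrite !gE !g_single.
    by clear Hs; move: Vbc; case: a; case: b; case: c; case: x; case: y => //=.
  rewrite !gE.
  have := gL1 c z u3 v3; have := gL2 c z u3 v3; have := gL1 b z u3 v3; have := gL2 b z u3 v3.
  by clear Hs; move: Vbc; case: a; case: b; case: c; case: x; case: y; case: z => //=; lia.
- rewrite (_ : S i.+1 = shift1 (S i)) // apply_shift1 !gE.
  rewrite (_ : S i.+1 = shift1 (S i)) // valid_shift1 in Vo.
  have Hs1 : size u2 <= n by move: Hs => /=; lia.
  have Hs2 : size (b :: u2) <= n by move: Hs => /=; lia.
  have := IH u2 (S i) v2 Hs1 Vo.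
  have := IH (b :: u2) (shift1 (S i)) (y :: v2) Hs2; rewrite (valid_shift1 b u2 (S i)) (apply_shift1 b u2 (S i)) => /(_ Vo).
  by case: (a == x) => /=; [lia | case: ((a != b) && (b != y)) => /=; lia].
Qed.

Lemma g4 n : forall u o v, size u <= n -> op_valid u o -> g u v <= (g (apply_op u o) v).+1.
Proof.
elim: n => [|n IH] [|a u1] o v; try by case: o => i /=.
move=> Hs Vo.
case: v => [|x v1]; first by rewrite !g_nil_r.
case: o Vo => [[|i]|[|i]] Vo.
-
  clear Vo Hs; rewrite (_ : apply_op (a :: u1) (R 0) = ~~ a :: u1) //.
  have := gL1 a x u1 v1; have := gL2 (~~ a) x u1 v1.
  by case: a; case: x; rewrite ?g_eq //=; lia.
-
  rewrite (_ : R i.+1 = shift1 (R i)) // apply_shift1.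
  rewrite (_ : R i.+1 = shift1 (R i)) // valid_shift1 in Vo.
  move: Vo; set o' := R i; clearbody o' => Vo.
  exact: (g4_shift x v1 IH Hs Vo).
-
  case: u1 Vo Hs => [|b u2] // /andP[_ Vab] Hs.
  rewrite (_ : apply_op [:: a, b & u2] (S 0) = [:: b, a & u2]) //.
  case: v1 => [|y v2]; first by rewrite !g_single; case: (a != x).
  rewrite !gE.
  have := gL1 b y u2 v2; have := gL2 b y u2 v2; have := gL1 a y u2 v2; have := gL2 a y u2 v2.
  by clear Hs; move: Vab; case: a; case: b; case: x; case: y => //=; lia.
- rewrite (_ : S i.+1 = shift1 (S i)) // apply_shift1.
  rewrite (_ : S i.+1 = shift1 (S i)) // valid_shift1 in Vo.
  move: Vo; set o' := S i; clearbody o' => Vo.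
  exact: (g4_shift x v1 IH Hs Vo).
Qed.

Lemma g_refl u : g u u = 0.
Proof. by elim: u => //= a u IH; rewrite eqxx. Qed.

Lemma g_lower os : forall u v, transforms u v os -> g u v <= size os.
Proof.
elim: os => [|o os IH] u v [/= V E]; first by subst v; rewrite g_refl.
move/andP: V => [Vo V].
have := IH (apply_op u o) v (conj V E).
have := @g4 (size u) u o v (leqnn _) Vo.
rewrite /=; lia.
Qed.

Fixpoint gs (u v : word) : seq op :=
  match u, v with
  | a :: u1, x :: v1 =>
    if a == x then map shift1 (gs u1 v1) else
    match u1, v1 with
    | b :: u2, y :: v2 => if (a != b) && (b != y) then S 0 :: map shift1 (map shift1 (gs u2 v2))
                          else R 0 :: map shift1 (gs u1 v1)
    | _, _ => R 0 :: map shift1 (gs u1 v1)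
    end
  | _, _ => [::]
  end.

Lemma sem_shift1 a u D k : sem (a :: u) (map shift1 D) k.+1 = sem u D k.
Proof. by elim: D => //= o D ->; rewrite mod_shift1 opv_shift1. Qed.
Lemma sem_shift0 a u D : sem (a :: u) (map shift1 D) 0 = a.
Proof. by elim: D => //= o D ->; rewrite mod0_shift1. Qed.
Lemma pos_shift1 D : pos (map shift1 D) = map succn (pos D).
Proof. by elim: D => //= o D IH; rewrite /pos /= map_cat -IH; case: o. Qed.
Lemma valid_map_shift1 a u D : all (op_valid (a :: u)) (map shift1 D) = all (op_valid u) D.
Proof. by elim: D => //= o D ->; rewrite valid_shift1. Qed.

Lemma gs_spec n : forall u v, size u <= n -> size u = size v ->
  [/\ size (gs u v) = g u v, DS u (gs u v) & forall k, sem u (gs u v) k = nth false v k].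
Proof.
elim: n => [|n IH] [|a u1] [|x v1] //= Hs Es; try by split => // k; rewrite nth_nil.
have Hs1 : size u1 <= n by lia.
have Es1 : size u1 = size v1 by lia.
have [S1 D1 K1] := IH u1 v1 Hs1 Es1.
move/andP: D1 => [U1 V1].
have Hsh1 : forall D, uniq (pos D) -> uniq (pos (map shift1 D)) /\ (0 \notin pos (map shift1 D)).
  move=> D U; rewrite pos_shift1 (map_inj_uniq succn_inj); split => //.
  by apply/mapP => [[k _]].
case: eqP => [<-|Nax].
  split; first by rewrite size_map.
  - have [U2 _] := Hsh1 _ U1; by rewrite /DS U2 valid_map_shift1.
  - by case=> [|k]; rewrite ?sem_shift0 ?sem_shift1.
have Rcase : [/\ size (R 0 :: map shift1 (gs u1 v1)) = (g u1 v1).+1,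
    DS (a :: u1) (R 0 :: map shift1 (gs u1 v1))
  & forall k, sem (a :: u1) (R 0 :: map shift1 (gs u1 v1)) k = nth false (x :: v1) k].
  split; first by rewrite /= size_map S1.
  - have [U2 N2] := Hsh1 _ U1.
    by rewrite /DS /pos /= -/(pos _) U2 N2 /= valid_map_shift1 V1.
  - case=> [|k] /=; first by move: Nax; case: a; case: x.
    by rewrite sem_shift1.
clear Hs Es; case: u1 v1 Hs1 Es1 S1 U1 V1 K1 Rcase => [|b u2] [|y v2] //= Hs1 Es1 S1 U1 V1 K1 Rcase.
case: ifP => // /andP[Nab Nby].
have Hs2 : size u2 <= n by lia.
have Es2 : size u2 = size v2 by lia.
have [S2 D2 K2] := IH u2 v2 Hs2 Es2.
move/andP: D2 => [U2 V2].
split; first by rewrite /= !size_map S2.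
- have H0 : forall s : seq nat, (0 \in [seq i.+1 | i <- s]) = false.
    by move=> s; apply/mapP => [[]].
  have H1 : forall s : seq nat, (1 \in [seq i.+1 | i <- [seq i.+1 | i <- s]]) = false.
    by move=> s; apply/mapP => [[k /mapP[j _ ->]]].
  rewrite /DS /pos /= -/(pos _) !pos_shift1 !inE /= !(map_inj_uniq succn_inj) U2 !H0 !H1.
  rewrite !valid_map_shift1 V2 /=.
  by rewrite Nab.
- case=> [|[|k]] /=.
  + by clear Rcase S1 U1 V1 K1 Hs1 Es1; move: Nax Nab Nby; case: a; case: b; case: x; case: y.
  + by clear Rcase S1 U1 V1 K1 Hs1 Es1; move: Nax Nab Nby; case: a; case: b; case: x; case: y.
  + by rewrite !sem_shift1 K2.
Qed.

Definition sub (y : word) (b l : nat) := take l (drop b y).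

Lemma size_sub y b l : b + l <= size y -> size (sub y b l) = l.
Proof. move=> H; rewrite /sub size_takel ?size_drop //; lia. Qed.

Lemma nth_sub y b l k : k < l -> nth false (sub y b l) k = nth false y (b + k).
Proof. by move=> H; rewrite /sub nth_take // nth_drop. Qed.

Lemma ham1 p s j : size p = size s ->
  (forall k, k < size p -> k != j -> nth false p k = nth false s k) ->
  exists os, size os <= 1 /\ transforms p s os.
Proof.
move=> Es H.
have [Lj|Lj] := ltnP j (size p); last first.
  exists [::]; split => //; split => //=.
  apply: (@eq_from_nth _ false) => // k K; apply: H => //; apply/negP => /eqP E; lia.
case: (boolP (nth false p j == nth false s j)) => [/eqP Ej|Nj].
  exists [::]; split => //; split => //=.
  apply: (@eq_from_nth _ false) => // k K.
  by case: (k =P j) => [->//|/eqP N]; apply: H.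
exists [:: R j]; split => //; split => /=; first by rewrite Lj.
apply: (@eq_from_nth _ false); first by rewrite size_set_nth -Es; lia.
move=> k K; rewrite nth_set_nth /=; case: (k =P j) => [->|/eqP N].
  by move: Nj; case: (nth false p j); case: (nth false s j).
apply: H => //; move: K; rewrite size_set_nth; lia.
Qed.

Lemma restrict1 y o b l : op_valid y o -> b + l <= size y ->
  exists os, size os <= 1 /\ transforms (sub y b l) (sub (apply_op y o) b l) os.
Proof.
move=> V L.
have L' : b + l <= size (apply_op y o) by rewrite size_apply.
have Es : size (sub y b l) = size (sub (apply_op y o) b l) by rewrite !size_sub.
have NA : forall k, nth false (apply_op y o) k = if k \in modified o then opv y o k else nth false y k.
  by move=> k; rewrite nth_apply.
case: o V NA Es L' => i V NA Es L'.
- apply: (@ham1 _ _ (i - b)) => // k; rewrite size_sub // => K N.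
  rewrite !nth_sub // NA inE; case: eqP => // E; lia.
- have [HH|C] := boolP ((b <= i) && (i.+1 < b + l)); last first.
    apply: (@ham1 _ _ (if i < b then i.+1 - b else i - b)) => // k; rewrite size_sub // => K N.
    rewrite !nth_sub // NA !inE; case: eqP => E; first by move: C N; case: ifP; lia.
    case: eqP => E2 //; move: C N; case: ifP; lia.
  case/andP: HH => Hb Hi.
  have Vs : op_valid (sub y b l) (S (i - b)).
    rewrite /= size_sub // !nth_sub; try lia.
    move/andP: V => [_ V]; rewrite (_ : b + (i - b) = i); last lia.
    by rewrite (_ : b + (i - b).+1 = i.+1) //; lia.
  exists [:: S (i - b)]; split => //; split; first by apply/andP; split.
  change (apply_op (sub y b l) (S (i - b)) = sub (apply_op y (S i)) b l).
  apply: (@eq_from_nth _ false); first by rewrite size_apply // !size_sub.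
  move=> k; rewrite size_apply // size_sub // => K.
  rewrite (nth_apply _ Vs) [RHS]nth_sub // NA !inE /= !nth_sub; try lia.
  case: (k =P i - b) => [E|N1]; first by subst k; rewrite (_ : b + (i - b) = i) ?eqxx //; try lia; rewrite (_ : b + (i - b).+1 = i.+1) //; lia.
  case: (k =P (i - b).+1) => [E|N2].
    subst k; rewrite (_ : b + (i - b).+1 = i.+1) ?eqxx ?orbT; last lia.
    rewrite ifN; last (apply/eqP; lia).
    by rewrite (_ : b + (i - b) = i) //; lia.
  rewrite /=; case: eqP => E1; first lia.
  case: eqP => E2 //; lia.
Qed.

Lemma transforms_cat p q r os1 os2 : transforms p q os1 -> transforms q r os2 ->
  transforms p r (os1 ++ os2).
Proof.
elim: os1 p => [|o os1 IH] p [/= V E] T2; first by subst q.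
move/andP: V => [Vo V]; have [V' E'] := IH _ (conj V E) T2.
by split; rewrite /= ?Vo.
Qed.

Lemma restrict os : forall y x b l, transforms y x os -> b + l <= size y ->
  exists os', size os' <= size os /\ transforms (sub y b l) (sub x b l) os'.
Proof.
elim: os => [|o os IH] y x b l [/= V E] L.
  by subst x; exists [::].
move/andP: V => [Vo V].
have [os1 [S1 [V1 E1]]] := restrict1 Vo L.
have L' : b + l <= size (apply_op y o) by rewrite size_apply.
have [os2 [S2 [V2 E2]]] := IH _ _ b l (conj V E) L'.
exists (os1 ++ os2); split; first by rewrite size_cat /=; lia.
exact: (transforms_cat (conj V1 E1) (conj V2 E2)).
Qed.

Lemma concl p s : (exists os, size os <= 2 /\ transforms p s os) ->
  (exists j1 j2, [/\ j1 != j2, nth false p j1 != nth false s j1 & nth false p j2 != nth false s j2]) ->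
  dist_tilde p s 2 \/ (dist_tilde p s 1 /\ exists i, op_valid p (S i) /\ s = apply_op p (S i)).
Proof.
move=> [os [Sz T]] [j1 [j2 [N12 D1 D2]]].
have T0 : forall os, transforms p s os -> size os <> 0.
  case=> [|o os'] // [_ E] _; rewrite /= in E; subst s.
  by move: D1; rewrite eqxx.
have TR : forall i, ~ transforms p s [:: R i].
  move=> i [_ /= E]; subst s; move: D1 D2; rewrite !nth_set_nth /=.
  case: (j1 =P i) => [E1|_]; last by rewrite eqxx.
  case: (j2 =P i) => [E2|_]; last by rewrite eqxx.
  by move: N12; rewrite E1 E2 eqxx.
have [[i Ti]|NS] := classic (exists i, transforms p s [:: S i]).
  right; split.
    split; first by exists [:: S i].
    by move=> os' /T0; case: (size os').
  exists i; case: Ti => /= /andP[V _] E; by split.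
have T1 : forall os, transforms p s os -> size os <> 1.
  case=> [|o [|o' os']] // Tos _; case: o Tos => i Tos; [exact: (TR i) | apply: NS; by exists i].
left; split.
  exists os; split => //; have := T0 _ T; have := T1 _ T; lia.
move=> os' T'; have := T0 _ T'; have := T1 _ T'; lia.
Qed.

Definition win (f x : word) (a : nat) : Prop :=
  a + size f <= size x /\ forall k, k < size f -> nth false x (a + k) = nth false f k.

Lemma infix_win f x : infix f x -> exists a, win f x a.
Proof.
move/infixP => [s [s' ->]]; exists (size s); split; first by rewrite !size_cat leq_add2l leq_addr.
by move=> k K; rewrite nth_cat ltnNge leq_addr /= addKn nth_cat K.
Qed.

Lemma win_infix f x a : win f x a -> infix f x.
Proof.
move=> [L H]; apply/infixP; exists (take a x), (drop (size f) (drop a x)).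
have -> : f = take (size f) (drop a x).
  apply: (@eq_from_nth _ false); first by rewrite size_takel // size_drop; lia.
  by move=> k K; rewrite nth_take // nth_drop H.
by rewrite size_takel ?size_drop; [rewrite !cat_take_drop | lia].
Qed.

Lemma valid_again w o : op_valid w o -> op_valid (apply_op w o) o.
Proof.
move=> V; case: o V => i V.
  by change (i < size (apply_op w (R i))); rewrite size_apply.
change ((i.+1 < size (apply_op w (S i))) &&
  (nth false (apply_op w (S i)) i != nth false (apply_op w (S i)) i.+1)).
rewrite size_apply // !nth_apply // !inE !eqxx /= ?orbT.
case/andP: V => L N; rewrite L eqxx /= ifN; first by rewrite eq_sym.
by apply/eqP; lia.
Qed.

Lemma apply_invol w o : op_valid w o -> apply_op (apply_op w o) o = w.
Proof.
move=> V; apply: (@eq_from_nth _ false); first by rewrite !size_apply // valid_again.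
move=> k _; rewrite (nth_apply _ (valid_again V)); case: ifP => K; last by rewrite nth_apply // K.
case: o V K => i V K.
  change (~~ nth false (apply_op w (R i)) i = nth false w k).
  rewrite nth_apply // inE eqxx /=; move: K; rewrite inE => /eqP ->; by rewrite negbK.
change ((if k == i then nth false (apply_op w (S i)) i.+1 else nth false (apply_op w (S i)) i) = nth false w k).
rewrite !nth_apply // !inE !eqxx /= ?orbT.
move: K; rewrite !inE; case: (k =P i) => [->|N] /=; first by rewrite ifN //; apply/eqP; lia.
by move/eqP => ->; rewrite eqxx.
Qed.

Definition touch (f : word) (a : nat) (o : op) : Prop :=
  exists2 k, k \in modified o & (a <= k) && (k < a + size f).

Lemma mod_bounds o k : k \in modified o -> lp o <= k <= (lp o).+1.
Proof. by rewrite mem_mod => /orP[/eqP->|/andP[_ /eqP->]]; lia. Qed.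

Lemma ovl f w o1 o2 a b :
  op_valid w o1 -> op_valid w o2 ->
  (forall k, k \in modified o1 -> k \notin modified o2) -> lp o1 != lp o2 ->
  a < b -> win f (apply_op w o1) a -> win f (apply_op w o2) b ->
  touch f a o1 -> touch f a o2 -> touch f b o1 -> touch f b o2 ->
  (exists l, overlap_typeS f l) \/ (exists l, err_overlap f 2 l).
Proof.
move=> V1 V2 Dj Nlp Hab [W1s W1] [W2s W2] [k11 K11 B11] [k21 K21 B21] [k12 K12 B12] [k22 K22 B22].
move: W1s W2s; rewrite !size_apply // => W1s W2s.
have M11 := mod_bounds K11; have M12 := mod_bounds K12.
have M21 := mod_bounds K21; have M22 := mod_bounds K22.
move: Nlp => /eqP Nlp.
have Hbn : b < a + size f.
  move: B11 B12 B21 B22 M11 M12 M21 M22 => /andP[? ?] /andP[? ?] /andP[? ?] /andP[? ?] /andP[? ?] /andP[? ?] /andP[? ?] /andP[? ?].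
  lia.
have [j1 J1 Hj1] : exists2 j, j \in modified o1 & (b <= j) && (j < a + size f).
  case: (ltnP k11 b) => H; [exists k12 | exists k11] => //;
  move: B11 B12 M11 M12 => /andP[? ?] /andP[? ?] /andP[? ?] /andP[? ?]; apply/andP; split; lia.
have [j2 J2 Hj2] : exists2 j, j \in modified o2 & (b <= j) && (j < a + size f).
  case: (ltnP k21 b) => H; [exists k22 | exists k21] => //;
  move: B21 B22 M21 M22 => /andP[? ?] /andP[? ?] /andP[? ?] /andP[? ?]; apply/andP; split; lia.
have NJ1 := Dj _ J1.
have NJ2 : j2 \notin modified o1 by apply/negP => /Dj; rewrite J2.
have J12 : j1 != j2 by apply/eqP => E; move: NJ1; rewrite E J2.
clear K11 K12 K21 K22 B11 B12 B21 B22 M11 M12 M21 M22 k11 k12 k21 k22 Nlp.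
set n := size f in W1s W2s Hbn Hj1 Hj2 W1 W2 *.
set l := a + n - b.
have Lb : b + l <= size (apply_op w o2) by rewrite size_apply //; rewrite /l; lia.
have HP : pre l f = sub (apply_op w o2) b l.
  apply: (@eq_from_nth _ false); first by rewrite size_sub // size_takel //; rewrite /l /n; lia.
  move=> k; rewrite size_takel; last by rewrite /l /n; lia.
  by move=> K; rewrite nth_take // nth_sub // W2 //; rewrite /l in K; lia.
have HS : suf l f = sub (apply_op w o1) b l.
  have Lb1 : b + l <= size (apply_op w o1) by rewrite size_apply //; rewrite /l; lia.
  apply: (@eq_from_nth _ false); first by rewrite size_sub // size_drop; rewrite /l /n; lia.
  move=> k; rewrite size_drop => K; rewrite nth_drop nth_sub; last by rewrite /l /n in K *; lia.
  rewrite -/n -W1; last by rewrite /l in K *; lia.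
  by congr nth; rewrite /l; lia.
have T : transforms (apply_op w o2) (apply_op w o1) [:: o2; o1].
  split; last by rewrite /= apply_invol.
  by rewrite /= valid_again //= apply_invol // V1.
have [os' [Sz T']] := restrict T Lb.
have := @concl (pre l f) (suf l f).
rewrite HP HS => /(_ (ex_intro _ os' (conj Sz T'))).
case.
- exists (j1 - b), (j2 - b); split.
  + apply/eqP; move: J12 Hj1 Hj2 => /eqP ? /andP[? ?] /andP[? ?]; lia.
  + rewrite !nth_sub; try (rewrite /l; move: Hj1 => /andP[? ?]; lia).
    rewrite (_ : b + (j1 - b) = j1); last by move: Hj1 => /andP[? ?]; lia.
    rewrite !nth_apply // J1 (negbTE NJ1) eq_sym; exact: opv_neq.
  + rewrite !nth_sub; try (rewrite /l; move: Hj2 => /andP[? ?]; lia).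
    rewrite (_ : b + (j2 - b) = j2); last by move: Hj2 => /andP[? ?]; lia.
    rewrite !nth_apply // J2 (negbTE NJ2); exact: opv_neq.
- move=> D2; right; exists l; split; last by rewrite HP HS.
  rewrite /l; apply/andP; split; lia.
- move=> [D1 [i [Vi Ei]]]; left; exists l; split.
    split; last by rewrite HP HS.
    rewrite /l; apply/andP; split; lia.
  by exists i; rewrite HP HS.
Qed.

Lemma Pmin (P : nat -> Prop) : (exists n, P n) -> exists n, P n /\ forall m, P m -> n <= m.
Proof.
move=> [n Pn].
suff H : forall N n, n <= N -> P n -> exists n0, P n0 /\ forall m, P m -> n0 <= m by exact: (H n n).
elim=> [|N IH] k Hk Pk.
  by exists k; split => // m _; lia.
have [[m [Pm Lm]]|NM] := classic (exists m, P m /\ m < k).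
  by apply: (IH m) => //; lia.
exists k; split => // m Pm; case: (ltnP m k) => // L; exfalso; apply: NM; by exists m.
Qed.

Lemma Pmax (P : nat -> Prop) B : (exists n, P n) -> (forall n, P n -> n <= B) ->
  exists n, P n /\ forall m, P m -> m <= n.
Proof.
move=> [n Pn] HB.
have Q0 : P (B - (B - n)) by rewrite subKn ?HB.
have [k [[Pk Lk] Mk]] := @Pmin (fun k => P (B - k) /\ k <= B) (ex_intro _ (B - n) (conj Q0 (leq_subr _ _))).
exists (B - k); split => // m Pm.
have Q1 : P (B - (B - m)) by rewrite subKn ?HB.
have := Mk (B - m) (conj Q1 (leq_subr _ _)).
have := HB m Pm; lia.
Qed.

Lemma core f : (~ exists l, overlap_typeS f l) -> (~ exists l, err_overlap f 2 l) ->
  forall w D v, D != [::] -> DS w D -> size v = size w ->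
     (forall k, nth false v k = sem w D k) -> free f w -> free f v ->
     exists2 o, o \in D & free f (apply_op w o).
Proof.
move=> noS no2 w D v DN /andP[U V] Sv Hv Fw Fv.
apply: NNPP => Hno.
have Vo : forall o, o \in D -> op_valid w o by move=> o; move/allP: V; apply.
have H : forall o, o \in D -> exists a, win f (apply_op w o) a.
  move=> o O; apply: infix_win; apply/negPn/negP => Fr; apply: Hno; by exists o.
have F2 : forall o a, o \in D -> win f (apply_op w o) a -> touch f a o.
  move=> o a O [Ws W]; apply: NNPP => NT; move: Fw; rewrite /free => /negP; apply.
  apply: (@win_infix _ _ a); split; first by rewrite size_apply ?Vo in Ws.
  move=> k K; rewrite -W // nth_apply ?Vo //; case: ifP => // KM; exfalso; apply: NT.
  by exists (a + k) => //; apply/andP; split; lia.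
have F3 : forall o a, o \in D -> win f (apply_op w o) a ->
    exists2 o', o' \in D & (o' != o) /\ touch f a o'.
  move=> o a O [Ws W]; apply: NNPP => NT; move: Fv; rewrite /free => /negP; apply.
  apply: (@win_infix _ _ a); split; first by rewrite Sv -(size_apply (Vo _ O)).
  move=> k K; rewrite -W // Hv nth_apply ?Vo //; case: ifP => KM.
    exact: (sem_in w U O KM).
  rewrite sem_out // => o' O'; apply/negP => KM'.
  case: (o' =P o) => [E|N]; first by move: KM; rewrite -E KM'.
  apply: NT; exists o' => //; split; first by apply/eqP.
  by exists (a + k) => //; apply/andP; split; lia.
have Lpinj : forall o1 o2, o1 \in D -> o2 \in D -> lp o1 = lp o2 -> o1 = o2.
  by move=> o1 o2 O1 O2 E; apply: (disj U O1 O2 (lp_mod o1)); rewrite E lp_mod.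
have Pd : forall o1 o2, o1 \in D -> o2 \in D -> o1 != o2 -> forall k, k \in modified o1 -> k \notin modified o2.
  by move=> o1 o2 O1 O2 N k K1; apply/negP => K2; move: N; rewrite (disj U O1 O2 K1 K2) eqxx.
have P4 : forall o1 o3, o1 \in D -> o3 \in D -> lp o1 < lp o3 -> forall k, k \in modified o1 -> k < lp o3.
  move=> o1 o3 O1 O3 L k K; have := mod_bounds K.
  have : k != lp o3.
    apply/eqP => E; have K3 : k \in modified o3 by rewrite E lp_mod.
    have E2 := disj U O1 O3 K K3.
    by move: L; rewrite E2 ltnn.
  move=> /eqP; lia.
have IV : forall a o1 o2 o3, o1 \in D -> o2 \in D -> o3 \in D -> touch f a o1 -> touch f a o2 ->
    lp o1 < lp o3 -> lp o3 < lp o2 -> touch f a o3.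
  move=> a o1 o2 o3 O1 O2 O3 [k1 K1 B1] [k2 K2 B2] L1 L2.
  exists (lp o3); first exact: lp_mod.
  have := P4 _ _ O1 O3 L1 _ K1; have := mod_bounds K2.
  by move: B1 B2 => /andP[? ?] /andP[? ?]; lia.
have Ex1 : exists n, exists2 o, o \in D & lp o = n.
  by case: (D) DN => // o D' _; exists (lp o); exists o => //; rewrite inE eqxx.
have Bd1 : forall n, (exists2 o, o \in D & lp o = n) -> n <= size w.
  by move=> n [o O <-]; apply: ltnW; exact: (op_valid_size (Vo _ O) (lp_mod o)).
have [N [[om Om Eom] Mom]] := Pmax Ex1 Bd1.
pose LE o := exists a, win f (apply_op w o) a /\ exists2 o', o' \in D & touch f a o' /\ lp o' < lp o.
have LEom : LE om.
  have [a Wa] := H _ Om; exists a; split => //.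
  have [o' O' [N' T']] := F3 _ _ Om Wa; exists o' => //; split => //.
  have := Mom (lp o') (ex_intro2 _ _ o' O' erefl); rewrite -Eom => L.
  have : lp o' != lp om by apply/eqP => E; move: N'; rewrite (Lpinj _ _ O' Om E) eqxx.
  by move=> /eqP; lia.
have [Ns [[os Os [Eos LEos]] Mos]] := @Pmin (fun n => exists2 o, o \in D & lp o = n /\ LE o)
  (ex_intro _ (lp om) (ex_intro2 _ _ om Om (conj erefl LEom))).
case: LEos => as' [Was [o2 O2 [T2 L2]]].
have Bd3 : forall n, (exists2 o, o \in D & lp o = n /\ n < lp os) -> n <= lp os.
  by move=> n [o _ [_ L]]; apply: ltnW.
have [Np [[p Op [Ep Lp]] Mp]] := Pmax (ex_intro _ (lp o2) (ex_intro2 _ _ o2 O2 (conj erefl L2))) Bd3.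
subst Np.
have Tasp : touch f as' p.
  have L' := Mp (lp o2) (ex_intro2 _ _ o2 O2 (conj erefl L2)).
  case: (ltngtP (lp o2) (lp p)) L' => // [Llt|Eq] _.
    exact: (IV as' o2 os p O2 Os Op T2 (F2 _ _ Os Was) Llt Lp).
  by rewrite -(Lpinj _ _ O2 Op Eq).
have [b Wb] := H _ Op.
have Tbp := F2 _ _ Op Wb.
have [q Oq [Nq Tbq]] := F3 _ _ Op Wb.
have Nlpq : lp q != lp p by apply/eqP => E; move: Nq; rewrite (Lpinj _ _ Oq Op E) eqxx.
have Tbos : touch f b os.
  case: (ltngtP (lp q) (lp p)) Nlpq => // [Lqp|Lpq] _.
    have L := Mos (lp p) (ex_intro2 _ _ p Op (conj erefl (ex_intro _ b (conj Wb (ex_intro2 _ _ q Oq (conj Tbq Lqp)))))).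
    by rewrite -Eos in L; move: (leq_ltn_trans L Lp); rewrite ltnn.
  case: (ltngtP (lp q) (lp os)) => [Lqos|Losq|Eq].
  - by move: (leq_ltn_trans (Mp (lp q) (ex_intro2 _ _ q Oq (conj erefl Lqos))) Lpq); rewrite ltnn.
  - exact: (IV b p q os Op Oq Os Tbp Tbq Lp Losq).
  - by rewrite -(Lpinj _ _ Oq Os Eq).
have Npos : p != os by apply/eqP => E; move: Lp; rewrite E ltnn.
have Dpos := Pd _ _ Op Os Npos.
have Dosp := Pd _ _ Os Op ltac:(by rewrite eq_sym).
have Lpos : lp p != lp os by apply/eqP => E; move: Lp; rewrite E ltnn.
have Tasos := F2 _ _ Os Was.
case: (ltngtP b as') => [Lb|Lb|Eb].
- by case: (ovl (Vo _ Op) (Vo _ Os) Dpos Lpos Lb Wb Was Tbp Tbos Tasp Tasos) => [/noS|/no2].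
- by case: (ovl (Vo _ Os) (Vo _ Op) Dosp ltac:(by rewrite eq_sym) Lb Was Wb Tasos Tasp Tbos Tbp) => [/noS|/no2].
- subst as'; case: Tbp => k K /andP[B1 B2].
  case: Wb => _ Wb; case: Was => _ Was.
  have := Wb (k - b); have := Was (k - b).
  rewrite (subnKC B1).
  have Kb : k - b < size f by clear -B1 B2; lia.
  move=> /(_ Kb) E1 /(_ Kb) E2.
  move: (opv_neq (Vo _ Op) K).
  have -> : opv w p k = nth false (apply_op w p) k by rewrite nth_apply ?Vo // K.
  have -> : nth false w k = nth false (apply_op w os) k by rewrite nth_apply ?Vo // (negbTE (Dpos _ K)).
  by rewrite E1 E2 eqxx.
Qed.

Theorem proposition3 (f : seq bool) :
  ~ tilde_isometric f ->
  (exists l, overlap_typeS f l) \/ (exists l, err_overlap f 2 l).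
Proof.
move=> NI; apply: NNPP => N; apply: NI.
have noS : ~ exists l, overlap_typeS f l by move=> H; apply: N; left.
have no2 : ~ exists l, err_overlap f 2 l by move=> H; apply: N; right.
move=> m Hm u v Su Sv Fu Fv.
have Euv : size u = size v by rewrite Su Sv.
have [S1 D1 K1] := gs_spec (leqnn (size u)) Euv.
have [os [P [V [E F]]]] := M (core noS no2) (erefl _) D1 (esym Euv) (fun k => esym (K1 k)) Fu Fv.
exists os; split => //; split; first by [].
split.
  split; first by exists os.
  move=> os' T; rewrite (perm_size P) S1; exact: g_lower.
move/andP: D1 => [U _].
by rewrite -/(pos os) (perm_uniq (perm_flatten (perm_map modified P))).
Qed.
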